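(* For every integer $e\ge2$, the function $\Omega_e=\mathrm{Sh}_{1-2e^{-1}}(\Omega)$ is convex.
   Context: $\Omega(s)=\frac2\pi(s\arcsin\frac s2+\sqrt{4-s^2})$ for $|s|\le2$ and $\Omega(s)=|s|$ otherwise; $\Omega$ is $C^1$, even, equal to $|s|$ for $|s|\ge2$ and strictly convex on $[-2,2]$. For such a function $f$ (with $a=2$) and $\alpha\in[0,1)$: $F_\alpha(s)=f(s)-\alpha s$, $x_\alpha^+=(f')^{-1}(\alpha)\in[0,a)$ (inverse of $f':[-a,a]\to[-1,1]$); let $F_\alpha^{-1}$ be the inverse of $F_\alpha|_{[x_\alpha^+,\infty)}$, $\phi=F_\alpha^{-1}\circ F_\alpha$, $\delta_x=(1-\alpha)^{-1}F_\alpha(x)-\phi(x)$, $s_\alpha=x_\alpha^++\delta_{x_\alpha^+}$; $x\mapsto x+\delta_x$ is an increasing bijection $(-\infty,x_\alpha^+]\to(-\infty,s_\alpha]$ with inverse $\tau$. Define $\mathrm{Sh}_\alpha(f)(x)=\alpha x+F_\alpha(\tau(x))$ for $x\le s_\alpha$ and $=x$ for $x>s_\alpha$. *)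

(* Defs.v *)
From Stdlib Require Import Reals ClassicalEpsilon.
From Coquelicot Require Import Coquelicot.
Open Scope R_scope.

Definition Omega (s : R) : R :=
  if Rle_dec (Rabs s) 2
  then 2 / PI * (s * asin (s / 2) + sqrt (4 - s ^ 2))
  else Rabs s.

(* Generic inverse of g restricted to the domain D, chosen by Hilbert's
   epsilon: the (unique, when g is injective on D and y is in g(D)) x in D
   with g x = y. *)
Definition inv_on (D : R -> Prop) (g : R -> R) (y : R) : R :=
  epsilon (inhabits 0) (fun x => D x /\ g x = y).

Section Shift.
Variables (f : R -> R) (a alpha : R).

Definition F_ (s : R) : R := f s - alpha * s.

Definition xplus : R := inv_on (fun x => -a <= x <= a) (Derive f) alpha.

Definition Finv (y : R) : R := inv_on (fun x => xplus <= x) F_ y.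

Definition phi (x : R) : R := Finv (F_ x).

Definition delta (x : R) : R := F_ x / (1 - alpha) - phi x.

Definition s_ : R := xplus + delta xplus.

Definition tau (y : R) : R := inv_on (fun x => x <= xplus) (fun x => x + delta x) y.

Definition Sh (x : R) : R :=
  if Rle_dec x s_ then alpha * x + F_ (tau x) else x.
End Shift.

Definition Shift (alpha : R) (f : R -> R) (a : R) : R -> R := Sh f a alpha.

Definition convex_fun (g : R -> R) : Prop :=
  forall x y t, 0 <= t <= 1 ->
    g (t * x + (1 - t) * y) <= t * g x + (1 - t) * g y.

(* Main.v *)
Require Import Defs.
From Stdlib Require Import Reals.
From Coquelicot Require Import Coquelicot.
From Stdlib Require Import Lra ClassicalEpsilon.
Open Scope R_scope.

Lemma inv_on_spec (D : R -> Prop) (g : R -> R) (y : R) :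
  (exists x, D x /\ g x = y) -> D (inv_on D g y) /\ g (inv_on D g y) = y.
Proof. intros H. unfold inv_on. apply epsilon_spec. exact H. Qed.

Lemma cont_intro (f : R -> R) (x : R) :
  (forall eps, 0 < eps -> exists d, 0 < d /\ forall y, Rabs (y - x) < d -> Rabs (f y - f x) < eps) ->
  continuity_pt f x.
Proof.
  intros H. unfold continuity_pt, continue_in, limit1_in, limit_in. intros eps Heps.
  destruct (H eps Heps) as [d [Hd H']]. exists d; split; auto.
  intros y [_ Hy]. simpl in *. unfold R_dist in *. apply H'; auto.
Qed.

Lemma cont_elim (f : R -> R) (x : R) : continuity_pt f x ->
  forall eps, 0 < eps -> exists d, 0 < d /\ forall y, Rabs (y - x) < d -> Rabs (f y - f x) < eps.
Proof.
  intros H eps Heps. unfold continuity_pt, continue_in, limit1_in, limit_in in H.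
  destruct (H eps Heps) as [d [Hd H']]. exists d; split; auto.
  intros y Hy. destruct (Req_dec y x) as [->|Hne].
  - unfold Rminus; rewrite Rplus_opp_r, Rabs_R0; auto.
  - apply (H' y). split. split. exact I. auto. simpl; unfold R_dist; auto.
Qed.

Lemma convex3 (F : R -> R) : convex_fun F -> forall x y z, x < y < z ->
  (F y - F x) * (z - y) <= (F z - F y) * (y - x).
Proof.
  intros HF x y z [H1 H2].
  set (t := (z - y) / (z - x)).
  assert (Ht : 0 <= t <= 1).
  { unfold t; split. apply Rdiv_le_0_compat; lra.
    apply Rmult_le_reg_r with (z - x). lra. unfold Rdiv; rewrite Rmult_assoc, Rinv_l; lra. }
  assert (Hy : t * x + (1 - t) * z = y).
  { unfold t; field; lra. }
  pose proof (HF x z t Ht) as Hc. rewrite Hy in Hc.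
  assert (E: (F y - F x) * (z - y) - (F z - F y) * (y - x) = (z - x) * (F y - (t * F x + (1 - t) * F z))).
  { unfold t; field; lra. }
  assert ((z - x) * (F y - (t * F x + (1 - t) * F z)) <= 0).
  { nra. }
  lra.
Qed.

Record Hyp (f : R -> R) (a alpha : R) : Prop := mkHyp {
 h_alpha : 0 <= alpha < 1;
 h_cont : forall x, continuity_pt (F_ f alpha) x;
 h_conv : convex_fun (F_ f alpha);
 h_xp : -3 <= xplus f a alpha <= 3;
 h_dec : forall u v, u < v <= xplus f a alpha -> F_ f alpha v < F_ f alpha u;
 h_inc : forall u v, xplus f a alpha <= u < v -> F_ f alpha u < F_ f alpha v;
 h_right : forall z, 3 <= z -> F_ f alpha z = (1-alpha)*z;
 h_left : forall y, y <= -3 -> F_ f alpha y = -(1+alpha)*y }.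

Section S.
Variables (f : R -> R) (a alpha : R).
Hypothesis H : Hyp f a alpha.
Let F := F_ f alpha.
Let xp := xplus f a alpha.
Let c := 1 - alpha.

Lemma c_pos : 0 < c.
Proof. destruct (h_alpha _ _ _ H). unfold c; lra. Qed.

Lemma winc : forall u v, xp <= u <= v -> F u <= F v.
Proof. intros u v Hu. destruct (Req_dec u v) as [->|]. lra.
  left. apply (h_inc _ _ _ H). unfold xp in *; lra. Qed.

Lemma wdec : forall u v, u <= v <= xp -> F v <= F u.
Proof. intros u v Hu. destruct (Req_dec u v) as [->|]. lra.
  left. apply (h_dec _ _ _ H). unfold xp in *; lra. Qed.

Lemma Fmin : forall x, F xp <= F x.
Proof. intros x. destruct (Rle_dec x xp). apply wdec; lra. apply winc; lra. Qed.

Lemma Rt_spec : forall h, F xp <= h -> xp <= Finv f a alpha h /\ F (Finv f a alpha h) = h.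
Proof.
  intros h Hh. unfold Finv. apply inv_on_spec.
  pose proof c_pos. pose proof (h_xp _ _ _ H) as Hx. fold xp in Hx.
  set (z1 := Rmax 3 (h / c)).
  assert (Hz1 : 3 <= z1) by apply Rmax_l.
  assert (Hz1' : h / c <= z1) by apply Rmax_r.
  assert (Fz1 : F z1 = c * z1) by (apply (h_right _ _ _ H); auto).
  assert (h <= F z1).
  { rewrite Fz1. apply Rmult_le_reg_l with (/ c). apply Rinv_0_lt_compat; auto.
    rewrite <- Rmult_assoc, Rinv_l by lra. rewrite Rmult_1_l, Rmult_comm. exact Hz1'. }
  destruct (IVT_gen F xp z1 h (h_cont _ _ _ H)) as [x [Hx1 Hx2]].
  { rewrite Rmin_left, Rmax_right; lra. }
  exists x. rewrite Rmin_left in Hx1 by lra. split. fold xp. lra. exact Hx2.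
Qed.

Lemma Rt_eq : forall z, xp <= z -> Finv f a alpha (F z) = z.
Proof.
  intros z Hz. destruct (Rt_spec (F z)) as [H1 H2]. apply winc; lra.
  set (z' := Finv f a alpha (F z)) in *.
  destruct (Rtotal_order z' z) as [Hl|[Heq|Hg]]; auto.
  - pose proof (h_inc _ _ _ H z' z ltac:(fold xp; lra)). fold F in H0. lra.
  - pose proof (h_inc _ _ _ H z z' ltac:(fold xp; lra)). fold F in H0. lra.
Qed.

Lemma Rt_le : forall h1 h2, F xp <= h1 <= h2 -> Finv f a alpha h1 <= Finv f a alpha h2.
Proof.
  intros h1 h2 Hh. destruct (Rt_spec h1) as [A1 B1]. lra. destruct (Rt_spec h2) as [A2 B2]. lra.
  destruct (Rle_dec (Finv f a alpha h1) (Finv f a alpha h2)) as [|Hn]; auto.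
  exfalso. pose proof (h_inc _ _ _ H (Finv f a alpha h2) (Finv f a alpha h1) ltac:(fold xp; lra)).
  fold F in H0. lra.
Qed.

Lemma Lt_ex : forall h, F xp <= h -> exists y, y <= xp /\ F y = h.
Proof.
  intros h Hh. pose proof (h_alpha _ _ _ H). pose proof (h_xp _ _ _ H) as Hx. fold xp in Hx.
  set (y1 := Rmin (-3) (- h / (1 + alpha))).
  assert (Hy1 : y1 <= -3) by apply Rmin_l.
  assert (Hy1' : y1 <= - h / (1 + alpha)) by apply Rmin_r.
  assert (Fy1 : F y1 = -(1+alpha) * y1) by (apply (h_left _ _ _ H); auto).
  assert (h <= F y1).
  { rewrite Fy1. assert (y1 * (1 + alpha) <= - h). 
    { apply Rmult_le_reg_r with (/ (1+alpha)). apply Rinv_0_lt_compat; lra.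
      rewrite Rmult_assoc, Rinv_r by lra. rewrite Rmult_1_r. exact Hy1'. }
    lra. }
  destruct (IVT_gen F y1 xp h (h_cont _ _ _ H)) as [x [Hx1 Hx2]].
  { rewrite Rmin_right, Rmax_left; lra. }
  exists x. rewrite Rmax_right in Hx1 by lra. split. lra. exact Hx2.
Qed.

Lemma slope : forall z2 z1, xp <= z2 <= z1 -> F z1 - F z2 <= c * (z1 - z2).
Proof.
  intros z2 z1 Hz. destruct (Req_dec z2 z1) as [->|Hne]. lra.
  pose proof (h_xp _ _ _ H) as Hx. fold xp in Hx.
  set (w := Rmax z1 3 + 1).
  assert (Hw1 : z1 <= Rmax z1 3) by apply Rmax_l.
  assert (Hw2 : 3 <= Rmax z1 3) by apply Rmax_r.
  pose proof (convex3 F (h_conv _ _ _ H) z2 z1 w ltac:(unfold w; lra)) as C1.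
  pose proof (convex3 F (h_conv _ _ _ H) z1 w (w+1) ltac:(unfold w; lra)) as C2.
  assert (Fw : F w = c * w) by (apply (h_right _ _ _ H); unfold w; lra).
  assert (Fw1 : F (w+1) = c * (w+1)) by (apply (h_right _ _ _ H); unfold w; lra).
  rewrite Fw1, Fw in C2.
  assert (E : F w - F z1 <= c * (w - z1)).
  { rewrite Fw. nra. }
  assert (HH : (F z1 - F z2) * (w - z1) <= (c * (z1 - z2)) * (w - z1)).
  { assert ((F w - F z1) * (z1 - z2) <= c * (w - z1) * (z1 - z2)).
    { apply Rmult_le_compat_r; lra. }
    nra. }
  apply Rmult_le_reg_r with (w - z1). unfold w; lra. exact HH.
Qed.


Let Rt := Finv f a alpha.
Let g y := y + delta f a alpha y.

Lemma delta_eq y : delta f a alpha y = F y / c - Rt (F y).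
Proof. reflexivity. Qed.

Lemma g_left : forall y, y <= -3 -> g y = y.
Proof.
  intros y Hy. unfold g. rewrite delta_eq. pose proof c_pos. pose proof (h_alpha _ _ _ H).
  pose proof (h_xp _ _ _ H) as Hx. fold xp in Hx.
  assert (Fy : F y = -(1+alpha)*y) by (apply (h_left _ _ _ H); auto).
  set (z := F y / c).
  assert (Fy' : F y = c * z) by (unfold z; field; lra).
  assert (Hz : 3 <= z).
  { apply Rmult_le_reg_l with c; auto. rewrite <- Fy', Fy. unfold c; nra. }
  assert (Fz : F z = c * z) by (apply (h_right _ _ _ H); auto).
  replace (Rt (F y)) with (Rt (F z)) by (f_equal; lra).
  unfold Rt; rewrite Rt_eq by lra. lra.
Qed.

Lemma g_strict : forall y1 y2, y1 < y2 <= xp -> g y1 < g y2.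
Proof.
  intros y1 y2 Hy. unfold g. rewrite !delta_eq. pose proof c_pos.
  assert (F y2 <= F y1) by (apply wdec; lra).
  pose proof (Fmin y2).
  pose proof (Rt_spec (F y1) ltac:(lra)) as [A1 B1].
  pose proof (Rt_spec (F y2) ltac:(lra)) as [A2 B2].
  pose proof (Rt_le (F y2) (F y1) ltac:(lra)) as L.
  fold Rt in A1, B1, A2, B2, L.
  pose proof (slope (Rt (F y2)) (Rt (F y1)) ltac:(lra)) as S1.
  rewrite B1, B2 in S1.
  set (q1 := F y1 / c) in *. set (q2 := F y2 / c) in *.
  assert (E1 : F y1 = c * q1) by (unfold q1; field; lra).
  assert (E2 : F y2 = c * q2) by (unfold q2; field; lra).
  assert (Hq : c * (q1 - q2) = F y1 - F y2) by lra.
  assert (q1 - q2 <= Rt (F y1) - Rt (F y2)).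
  { apply Rmult_le_reg_l with c; auto. rewrite Hq. lra. }
  lra.
Qed.

Let Rtt h := Rt (Rmax h (F xp)).

Lemma Rmax_lip : forall u v w, Rabs (Rmax u w - Rmax v w) <= Rabs (u - v).
Proof. intros u v w. unfold Rmax. destruct (Rle_dec u w); destruct (Rle_dec v w); split_Rabs; lra. Qed.

Lemma Rtt_cont : forall h0, continuity_pt Rtt h0.
Proof.
  intros h0. apply cont_intro. intros eps Heps.
  assert (Hm0 : F xp <= Rmax h0 (F xp)) by apply Rmax_r.
  destruct (Rt_spec _ Hm0) as [A0 B0]. fold Rt in A0, B0.
  set (z0 := Rt (Rmax h0 (F xp))) in *.
  assert (D1 : F z0 < F (z0 + eps)) by (apply (h_inc _ _ _ H); fold xp; lra).
  assert (exists d2, 0 < d2 /\ (xp <= z0 - eps -> d2 <= F z0 - F (z0 - eps))).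
  { destruct (Rle_dec xp (z0 - eps)) as [Hle|Hn].
    - exists (F z0 - F (z0 - eps)). split; [|lra].
      assert (F (z0 - eps) < F z0) by (apply (h_inc _ _ _ H); fold xp; lra). lra.
    - exists 1. split; lra. }
  destruct H0 as [d2 [Hd2 Hd2']].
  exists (Rmin (F (z0 + eps) - F z0) d2). split.
  { apply Rmin_glb_lt; lra. }
  intros h Hh. assert (Hh1 : Rabs (h - h0) < F (z0 + eps) - F z0) by (eapply Rlt_le_trans; [exact Hh| apply Rmin_l]).
  assert (Hh2 : Rabs (h - h0) < d2) by (eapply Rlt_le_trans; [exact Hh| apply Rmin_r]).
  pose proof (Rmax_lip h h0 (F xp)) as Lp.
  assert (Hm : F xp <= Rmax h (F xp)) by apply Rmax_r.
  destruct (Rt_spec _ Hm) as [A B]. fold Rt in A, B.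
  unfold Rtt. fold z0. set (z := Rt (Rmax h (F xp))) in *.
  assert (z < z0 + eps).
  { destruct (Rlt_dec z (z0 + eps)) as [|Hn]; auto. exfalso.
    assert (F (z0 + eps) <= F z) by (apply winc; lra). split_Rabs; lra. }
  assert (z0 - eps < z).
  { destruct (Rlt_dec (z0 - eps) z) as [|Hn]; auto. exfalso.
    assert (xp <= z0 - eps) by lra.
    assert (F z <= F (z0 - eps)) by (apply winc; lra).
    specialize (Hd2' H1). split_Rabs; lra. }
  split_Rabs; lra.
Qed.


Let Gt y := y + F y / c - Rtt (F y).

Lemma g_Gt : forall y, g y = Gt y.
Proof.
  intros y. unfold g, Gt, Rtt. rewrite delta_eq. rewrite Rmax_left by (apply Fmin). ring.
Qed.

Lemma Gt_cont : continuity Gt.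
Proof.
  intros x. pose proof c_pos.
  assert (C1 : continuity_pt (comp Rtt F) x).
  { apply continuity_pt_comp. apply (h_cont _ _ _ H). apply Rtt_cont. }
  assert (C0 : continuity_pt (fct_cte c) x).
  { apply continuity_pt_const. intros u v; reflexivity. }
  assert (Ci : continuity_pt id x) by (apply derivable_continuous_pt, derivable_pt_id).
  assert (C : continuity_pt ((id + (F / fct_cte c)) - comp Rtt F)%F x).
  { apply continuity_pt_minus; auto. apply continuity_pt_plus; auto.
    apply continuity_pt_div; auto. apply (h_cont _ _ _ H). unfold fct_cte; lra. }
  exact C.
Qed.

Let s := s_ f a alpha.

Lemma s_g : s = g xp.
Proof. reflexivity. Qed.

Lemma g_le : forall y1 y2, y1 <= y2 <= xp -> g y1 <= g y2.
Proof. intros y1 y2 Hy. destruct (Req_dec y1 y2) as [->|]. lra. left; apply g_strict; lra. Qed.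

Lemma tau_spec : forall y0, y0 <= s -> tau f a alpha y0 <= xp /\ g (tau f a alpha y0) = y0.
Proof.
  intros y0 Hy0. unfold tau. apply (inv_on_spec (fun x => x <= xplus f a alpha) (fun x => x + delta f a alpha x) y0).
  pose proof (h_xp _ _ _ H) as Hx. fold xp in Hx.
  destruct (Rle_dec y0 (-3)) as [Hl|Hn].
  - exists y0. split. fold xp; lra. apply g_left; auto.
  - assert (Gm : Gt (-3) = -3) by (rewrite <- g_Gt; apply g_left; lra).
    assert (Gx : Gt xp = s) by (rewrite <- g_Gt; reflexivity).
    destruct (IVT_gen Gt (-3) xp y0 Gt_cont) as [y [Hy1 Hy2]].
    { rewrite Gm, Gx. rewrite Rmin_left, Rmax_right; lra. }
    exists y. rewrite Rmin_left, Rmax_right in Hy1 by lra. split. fold xp; lra.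
    change (g y = y0). rewrite g_Gt; auto.
Qed.

Lemma tau_eq : forall y, y <= xp -> tau f a alpha (g y) = y.
Proof.
  intros y Hy. assert (g y <= s) by (rewrite s_g; apply g_le; lra).
  destruct (tau_spec (g y) H0) as [A B].
  set (t := tau f a alpha (g y)) in *.
  destruct (Rtotal_order t y) as [Hl|[Heq|Hg]]; auto.
  - pose proof (g_strict t y ltac:(lra)). lra.
  - pose proof (g_strict y t ltac:(lra)). lra.
Qed.

Let Hf x := F (tau f a alpha x).

Lemma s_val : c * s = F xp.
Proof.
  pose proof c_pos. rewrite s_g. unfold g. rewrite delta_eq. unfold Rt. rewrite Rt_eq by lra.
  field. lra.
Qed.

Lemma H_s : Hf s = F xp.
Proof. unfold Hf. rewrite s_g, tau_eq by lra. reflexivity. Qed.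

Lemma H_ge : forall x, x <= s -> c * x <= Hf x.
Proof.
  intros x Hx. destruct (tau_spec x Hx) as [A B]. unfold Hf.
  set (y := tau f a alpha x) in *. rewrite <- B. unfold g. rewrite delta_eq.
  pose proof c_pos. pose proof (Rt_spec (F y) (Fmin y)) as [A1 B1]. fold Rt in A1.
  assert (E : c * (y + (F y / c - Rt (F y))) = F y + c * (y - Rt (F y))) by (field; lra).
  rewrite E. assert (c * (y - Rt (F y)) <= 0) by nra. lra.
Qed.

Lemma tau_le : forall x1 x2, x1 <= x2 <= s -> tau f a alpha x1 <= tau f a alpha x2.
Proof.
  intros x1 x2 Hx. destruct (tau_spec x1 ltac:(lra)) as [A1 B1]. destruct (tau_spec x2 ltac:(lra)) as [A2 B2].
  destruct (Rle_dec (tau f a alpha x1) (tau f a alpha x2)) as [|Hn]; auto.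
  pose proof (g_strict (tau f a alpha x2) (tau f a alpha x1) ltac:(lra)). lra.
Qed.

Lemma H_mono : forall x1 x2, x1 <= x2 <= s -> Hf x2 <= Hf x1.
Proof.
  intros x1 x2 Hx. unfold Hf. apply wdec. split. apply tau_le; auto.
  apply (tau_spec x2). lra.
Qed.

Lemma H_conv : forall x1 x2 t, x1 <= s -> x2 <= s -> 0 <= t <= 1 ->
  Hf (t * x1 + (1 - t) * x2) <= t * Hf x1 + (1 - t) * Hf x2.
Proof.
  intros x1 x2 t H1 H2 Ht. pose proof c_pos.
  destruct (tau_spec x1 H1) as [A1 B1]. destruct (tau_spec x2 H2) as [A2 B2].
  unfold Hf. set (y1 := tau f a alpha x1) in *. set (y2 := tau f a alpha x2) in *.
  set (x := t * x1 + (1 - t) * x2).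
  assert (Hx : x <= s) by (unfold x; nra).
  destruct (tau_spec x Hx) as [A B]. set (y := tau f a alpha x) in *.
  set (hb := t * F y1 + (1 - t) * F y2).
  pose proof (Fmin y1). pose proof (Fmin y2).
  assert (Hhb : F xp <= hb) by (unfold hb; nra).
  destruct (Lt_ex hb Hhb) as [yb [Ayb Byb]].
  set (ym := t * y1 + (1 - t) * y2).
  assert (Hym : ym <= xp) by (unfold ym; nra).
  assert (Fym : F ym <= hb) by (apply (h_conv _ _ _ H); auto).
  assert (L1 : yb <= ym).
  { destruct (Rle_dec yb ym) as [|Hn]; auto. exfalso.
    pose proof (h_dec _ _ _ H ym yb ltac:(fold xp; lra)) as Hc. fold F in Hc. lra. }
  pose proof (Rt_spec _ (Fmin y1)) as [C1 D1]. pose proof (Rt_spec _ (Fmin y2)) as [C2 D2].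
  pose proof (Rt_spec _ Hhb) as [Cb Db]. fold Rt in C1, D1, C2, D2, Cb, Db.
  set (z1 := Rt (F y1)) in *. set (z2 := Rt (F y2)) in *. set (zb := Rt hb) in *.
  set (zm := t * z1 + (1 - t) * z2).
  assert (Hzm : xp <= zm) by (unfold zm; nra).
  assert (Fzm : F zm <= hb).
  { unfold hb. rewrite <- D1, <- D2. apply (h_conv _ _ _ H); auto. }
  assert (L2 : zm <= zb).
  { destruct (Rle_dec zm zb) as [|Hn]; auto. exfalso.
    pose proof (h_inc _ _ _ H zb zm ltac:(fold xp; lra)) as Hc. fold F in Hc. lra. }
  assert (Gyb : g yb <= g y).
  { unfold g. rewrite !delta_eq. rewrite Byb. fold zb.
    unfold g in B1, B2, B. rewrite delta_eq in B1, B2, B. fold z1 in B1. fold z2 in B2.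
    assert (E : y + (F y / c - Rt (F y)) = t * (y1 + (F y1 / c - z1)) + (1 - t) * (y2 + (F y2 / c - z2))).
    { rewrite B, B1, B2. reflexivity. }
    rewrite E.
    assert (E2 : hb / c = t * (F y1 / c) + (1 - t) * (F y2 / c)) by (unfold hb; field; lra).
    rewrite E2. unfold ym, zm in *. nra. }
  assert (L3 : yb <= y).
  { destruct (Rle_dec yb y) as [|Hn]; auto. exfalso.
    pose proof (g_strict y yb ltac:(lra)). lra. }
  fold hb. rewrite <- Byb. apply wdec. lra.
Qed.

Lemma Sh_eq : forall x, Sh f a alpha x = Rmax x (alpha * x + Hf (Rmin x s)).
Proof.
  intros x. pose proof c_pos. unfold Sh. fold s. destruct (Rle_dec x s) as [Hl|Hn].
  - rewrite Rmin_left by lra. rewrite Rmax_right. reflexivity.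
    pose proof (H_ge x Hl). unfold Hf in *. unfold c in *. fold F. lra.
  - rewrite Rmin_right by lra. rewrite H_s. rewrite Rmax_left. reflexivity.
    pose proof s_val. unfold c in *. nra.
Qed.

Lemma Sh_convex_sec : convex_fun (Sh f a alpha).
Proof.
  intros x y t Ht. rewrite !Sh_eq.
  set (K := fun x => alpha * x + Hf (Rmin x s)).
  assert (KC : K (t * x + (1 - t) * y) <= t * K x + (1 - t) * K y).
  { unfold K.
    assert (M : t * Rmin x s + (1 - t) * Rmin y s <= Rmin (t * x + (1 - t) * y) s).
    { pose proof (Rmin_l x s). pose proof (Rmin_r x s). pose proof (Rmin_l y s). pose proof (Rmin_r y s).
      apply Rmin_glb; nra. }
    assert (Hf (Rmin (t * x + (1 - t) * y) s) <= Hf (t * Rmin x s + (1 - t) * Rmin y s)).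
    { apply H_mono. split. auto. apply Rmin_r. }
    pose proof (H_conv (Rmin x s) (Rmin y s) t (Rmin_r _ _) (Rmin_r _ _) Ht).
    nra. }
  fold (K (t * x + (1 - t) * y)) (K x) (K y).
  pose proof (Rmax_l x (K x)). pose proof (Rmax_r x (K x)).
  pose proof (Rmax_l y (K y)). pose proof (Rmax_r y (K y)).
  apply Rmax_lub; nra.
Qed.

End S.

Definition O1 (s : R) := 2/PI*(s*asin(s/2)+sqrt(4-s^2)).
Definition Dm (s : R) := 2/PI*asin(s/2).

Lemma asin_hi x : 1 <= x -> asin x = PI/2.
Proof. intros. unfold asin. destruct (Rle_dec x (-1)); [lra|]. destruct (Rle_dec 1 x); lra. Qed.
Lemma asin_lo x : x <= -1 -> asin x = -(PI/2).
Proof. intros. unfold asin. destruct (Rle_dec x (-1)); lra. Qed.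

Lemma is_derive_asin u : -1 < u < 1 -> is_derive asin u (1 / sqrt (1 - u²)).
Proof.
  intros Hu. apply is_derive_Reals. apply derive_pt_eq_1 with (derivable_pt_asin u Hu).
  apply derive_pt_asin.
Qed.

Lemma O1_deriv x : -2 < x < 2 -> is_derive O1 x (Dm x).
Proof.
  intros Hx. unfold O1, Dm. pose proof PI_RGT_0.
  assert (Hu : -1 < x/2 < 1) by lra.
  pose proof (is_derive_asin (x/2) Hu) as Da.
  assert (Hr : 0 < 1 - (x/2)²) by (unfold Rsqr; nra).
  pose proof (sqrt_lt_R0 _ Hr) as Hsr.
  assert (S4 : sqrt (4 + - (x * (x * 1))) = 2 * sqrt (1 - (x/2)²)).
  { replace (4 + - (x * (x * 1))) with (4 * (1 - (x/2)²)) by (unfold Rsqr; field).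
    rewrite sqrt_mult by lra. replace 4 with (2*2) by lra. rewrite sqrt_square by lra. reflexivity. }
  auto_derive.
  - repeat split. exists (1 / sqrt (1 - (x/2)²)). replace (x * / 2) with (x/2) by reflexivity. exact Da. nra.
  - assert (Da' : Derive (fun y => asin y) (x * / 2) = 1/sqrt(1-(x/2)²)) by (apply is_derive_unique; exact Da).
    rewrite Da', S4. change (x * / 2) with (x / 2).
    field. split; lra.
Qed.

Lemma asin_le x y : x <= y -> asin x <= asin y.
Proof.
  intros Hxy. pose proof PI_RGT_0.
  destruct (Rle_dec y (-1)). rewrite !asin_lo by lra. lra.
  destruct (Rle_dec 1 x). rewrite !asin_hi by lra. lra.
  destruct (Rle_dec x (-1)). rewrite asin_lo by lra. apply asin_bound.
  destruct (Rle_dec 1 y). rewrite (asin_hi y) by lra. apply asin_bound.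
  destruct (Rle_dec (asin x) (asin y)) as [|Hn]; auto. exfalso.
  pose proof (asin_bound x). pose proof (asin_bound y).
  pose proof (sin_increasing_1 (asin y) (asin x) ltac:(lra) ltac:(lra) ltac:(lra) ltac:(lra) ltac:(lra)) as Hs.
  rewrite !sin_asin in Hs by lra. lra.
Qed.

Lemma asin_clamp x : asin x = asin (Rmin (Rmax x (-1)) 1).
Proof.
  unfold Rmax, Rmin. destruct (Rle_dec x (-1)).
  - destruct (Rle_dec (-1) 1); [|lra]. rewrite !asin_lo; lra.
  - destruct (Rle_dec x 1). reflexivity. rewrite !asin_hi; lra.
Qed.

Lemma asin_lt x y : x < y -> -1 < y -> x < 1 -> asin x < asin y.
Proof.
  intros H1 H2 H3. rewrite (asin_clamp x), (asin_clamp y).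
  set (x' := Rmin (Rmax x (-1)) 1). set (y' := Rmin (Rmax y (-1)) 1).
  assert (Hx' : -1 <= x' <= 1 /\ x' < y' /\ -1 <= y' <= 1).
  { unfold x', y', Rmax, Rmin. repeat (destruct Rle_dec); lra. }
  pose proof PI_RGT_0.
  destruct (Rlt_dec (asin x') (asin y')) as [|Hn]; auto. exfalso.
  pose proof (asin_bound x'). pose proof (asin_bound y').
  destruct (Req_dec (asin x') (asin y')) as [He|Hne].
  - assert (Hs : sin (asin x') = sin (asin y')) by (rewrite He; auto). rewrite !sin_asin in Hs by lra. lra.
  - pose proof (sin_increasing_1 (asin y') (asin x') ltac:(lra) ltac:(lra) ltac:(lra) ltac:(lra) ltac:(lra)) as Hs.
    rewrite !sin_asin in Hs by lra. lra.
Qed.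

Lemma asin_cont1 : continuity_pt asin 1.
Proof.
  apply cont_intro. intros eps Heps. pose proof PI_RGT_0.
  set (e := Rmin (eps/2) (PI/4)).
  assert (He : 0 < e <= eps/2 /\ e <= PI/4).
  { unfold e; split; [split|]. apply Rmin_glb_lt; lra. apply Rmin_l. apply Rmin_r. }
  assert (Hs : sin (PI/2 - e) < 1).
  { rewrite <- sin_PI2. apply sin_increasing_1; lra. }
  exists (1 - sin (PI/2 - e)). split. lra.
  intros y Hy. rewrite asin_1.
  destruct (Rle_dec 1 y). rewrite asin_hi by lra. rewrite Rminus_diag, Rabs_R0. lra.
  assert (Ha : asin (sin (PI/2 - e)) <= asin y) by (apply asin_le; split_Rabs; lra).
  rewrite asin_sin in Ha by lra. pose proof (asin_bound y). split_Rabs; lra.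
Qed.

Lemma Dm_cont2 : continuity_pt Dm 2.
Proof.
  apply cont_intro. intros eps Heps. pose proof PI_RGT_0.
  destruct (cont_elim _ _ asin_cont1 (eps * PI / 2) ltac:(nra)) as [d [Hd Hd']].
  exists (2 * d). split. lra. intros y Hy. unfold Dm.
  replace (2/2) with 1 by field.
  specialize (Hd' (y/2) ltac:(split_Rabs; lra)).
  replace (2 / PI * asin (y / 2) - 2 / PI * asin 1) with (2/PI * (asin (y/2) - asin 1)) by ring.
  rewrite Rabs_mult, Rabs_right. 2: { apply Rle_ge; unfold Rdiv; apply Rmult_le_pos; [lra| left; apply Rinv_0_lt_compat; lra]. }
  apply Rmult_lt_reg_l with (PI/2). lra.
  replace (PI / 2 * (2 / PI * Rabs (asin (y / 2) - asin 1))) with (Rabs (asin (y / 2) - asin 1)) by (field; lra).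
  lra.
Qed.

Lemma O1_cont2 : continuity_pt O1 2.
Proof.
  unfold O1.
  apply (continuity_pt_mult (fun _ => 2/PI) (fun s => s*asin(s/2)+sqrt(4-s^2))).
  - apply continuity_pt_const; intros u v; reflexivity.
  - apply (continuity_pt_plus (fun s => s*asin(s/2)) (fun s => sqrt(4-s^2))).
    + apply (continuity_pt_mult (fun s => s) (fun s => asin (s/2))).
      * apply derivable_continuous_pt, derivable_pt_id.
      * apply (continuity_pt_comp (fun s => s/2) asin).
        -- apply derivable_continuous_pt. reg.
        -- cbv beta. replace (2/2) with 1 by field. exact asin_cont1.
    + apply (continuity_pt_comp (fun s => 4 - s^2) sqrt).
      * apply derivable_continuous_pt. reg.
      * apply continuity_pt_sqrt. cbv beta. lra.
Qed.

Lemma O1_2 : O1 2 = 2.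
Proof.
  unfold O1. replace (2/2) with 1 by field. rewrite asin_1.
  replace (4 - 2^2) with 0 by ring. rewrite sqrt_0. pose proof PI_RGT_0. field. lra.
Qed.

Lemma Omega_in s : Rabs s <= 2 -> Omega s = O1 s.
Proof. intros. unfold Omega. destruct (Rle_dec (Rabs s) 2); [reflexivity|lra]. Qed.
Lemma Omega_out s : 2 < Rabs s -> Omega s = Rabs s.
Proof. intros. unfold Omega. destruct (Rle_dec (Rabs s) 2); [lra|reflexivity]. Qed.

Lemma Omega_cont2 : continuity_pt Omega 2.
Proof.
  apply cont_intro. intros eps Heps.
  destruct (cont_elim _ _ O1_cont2 eps Heps) as [d [Hd Hd']].
  exists (Rmin 1 (Rmin d eps)). split. repeat apply Rmin_glb_lt; lra.
  intros y Hy. pose proof (Rmin_l 1 (Rmin d eps)). pose proof (Rmin_r 1 (Rmin d eps)).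
  pose proof (Rmin_l d eps). pose proof (Rmin_r d eps).
  rewrite (Omega_in 2) by (rewrite Rabs_right; lra).
  destruct (Rle_dec (Rabs y) 2).
  - rewrite Omega_in by auto. apply Hd'. lra.
  - rewrite Omega_out by lra. rewrite O1_2. rewrite (Rabs_right y) by (split_Rabs; lra).
    lra.
Qed.

Lemma loc_intro x r (P : R -> Prop) : 0 < r -> (forall y, Rabs (y - x) < r -> P y) -> locally x P.
Proof. intros Hr HP. exists (mkposreal r Hr). intros y Hy. apply HP. exact Hy. Qed.

Lemma Omega_deriv_in x : -2 < x < 2 -> is_derive Omega x (Dm x).
Proof.
  intros Hx. apply is_derive_ext_loc with O1.
  - apply loc_intro with (Rmin (2 - x) (x + 2)). apply Rmin_glb_lt; lra.
    intros y Hy. pose proof (Rmin_l (2 - x) (x + 2)). pose proof (Rmin_r (2 - x) (x + 2)).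
    symmetry. apply Omega_in. split_Rabs; lra.
  - apply O1_deriv; auto.
Qed.

Lemma Omega_deriv_hi x : 2 < x -> is_derive Omega x (Dm x).
Proof.
  intros Hx. unfold Dm. rewrite asin_hi by lra. pose proof PI_RGT_0.
  replace (2 / PI * (PI / 2)) with 1 by (field; lra).
  apply is_derive_ext_loc with (fun y => y).
  - apply loc_intro with (x - 2). lra.
    intros y Hy. rewrite Omega_out; split_Rabs; lra.
  - auto_derive; auto.
Qed.

Lemma Omega_deriv_lo x : x < -2 -> is_derive Omega x (Dm x).
Proof.
  intros Hx. unfold Dm. rewrite asin_lo by lra. pose proof PI_RGT_0.
  replace (2 / PI * - (PI / 2)) with (-1) by (field; lra).
  apply is_derive_ext_loc with (fun y => - y).
  - apply loc_intro with (-2 - x). lra.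
    intros y Hy. rewrite Omega_out; split_Rabs; lra.
  - auto_derive; auto.
Qed.

Lemma glue (f d : R -> R) x r : 0 < r ->
  (forall y, 0 < Rabs (y - x) < r -> is_derive f y (d y)) ->
  continuity_pt f x -> continuity_pt d x -> is_derive f x (d x).
Proof.
  intros Hr Hder Hf Hd. apply is_derive_Reals. intros eps Heps.
  destruct (cont_elim d x Hd eps Heps) as [del [Hdel Hd']].
  assert (Hm : 0 < Rmin del r) by (apply Rmin_glb_lt; lra).
  exists (mkposreal _ Hm). intros h Hh0 Hh. simpl in Hh.
  pose proof (Rmin_l del r). pose proof (Rmin_r del r).
  destruct (MVT_gen f x (x + h) d) as [c [Hc1 Hc2]].
  - intros y Hy. apply Hder. unfold Rmin, Rmax in Hy. destruct (Rle_dec x (x + h)); split_Rabs; lra.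
  - intros y Hy. destruct (Req_dec y x) as [->|Hne]; auto.
    apply continuity_pt_filterlim.
    assert (E : ex_derive f y).
    { exists (d y). apply Hder. unfold Rmin, Rmax in Hy. destruct (Rle_dec x (x + h)); split_Rabs; lra. }
    exact (ex_derive_continuous f y E).
  - replace ((f (x + h) - f x) / h - d x) with (d c - d x).
    + apply Hd'. unfold Rmin, Rmax in Hc1. destruct (Rle_dec x (x + h)); split_Rabs; lra.
    + rewrite Hc2. field. auto.
Qed.

Lemma Omega_deriv2 : is_derive Omega 2 (Dm 2).
Proof.
  apply glue with 1. lra.
  - intros y Hy. destruct (Rlt_dec y 2).
    + apply Omega_deriv_in. split_Rabs; lra.
    + apply Omega_deriv_hi. split_Rabs; lra.
  - exact Omega_cont2.
  - exact Dm_cont2.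
Qed.

Lemma Omega_even s : Omega (- s) = Omega s.
Proof.
  unfold Omega. rewrite Rabs_Ropp. destruct (Rle_dec (Rabs s) 2); auto.
  replace (- s / 2) with (- (s / 2)) by field. rewrite asin_opp.
  replace ((- s) ^ 2) with (s ^ 2) by ring. ring.
Qed.

Lemma Omega_deriv x : is_derive Omega x (Dm x).
Proof.
  destruct (Rtotal_order x 2) as [H1|[H1|H1]].
  - destruct (Rtotal_order x (-2)) as [H2|[H2|H2]].
    + apply Omega_deriv_lo; auto.
    + subst x. apply is_derive_ext with (fun y => Omega (- y)).
      { intros; apply Omega_even. }
      replace (Dm (-2)) with (scal (-1) (Dm 2)).
      * apply (is_derive_comp Omega (fun y => - y)).
        -- replace (- -2) with 2 by ring. exact Omega_deriv2.
        -- auto_derive; auto.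
      * unfold Dm. replace (-2/2) with (-(2/2)) by field. rewrite asin_opp. unfold scal; simpl; unfold mult; simpl. ring.
    + apply Omega_deriv_in; lra.
  - subst; apply Omega_deriv2.
  - apply Omega_deriv_hi; auto.
Qed.

Lemma mvt (g dg : R -> R) u v : (forall x, is_derive g x (dg x)) -> u < v ->
  exists c, u <= c <= v /\ g v - g u = dg c * (v - u).
Proof.
  intros Hd Huv. destruct (MVT_gen g u v dg) as [c [Hc1 Hc2]].
  - intros; apply Hd.
  - intros y _. apply continuity_pt_filterlim.
    assert (E : ex_derive g y) by (exists (dg y); apply Hd).
    exact (ex_derive_continuous g y E).
  - rewrite Rmin_left, Rmax_right in Hc1 by lra. exists c; split; auto.
Qed.

Lemma conv_core (g dg : R -> R) : (forall x, is_derive g x (dg x)) -> (forall u v, u <= v -> dg u <= dg v) ->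
  forall x y t, x < y -> 0 <= t <= 1 -> g (t * x + (1 - t) * y) <= t * g x + (1 - t) * g y.
Proof.
  intros Hd Hm x y t Hxy Ht.
  destruct (Req_dec t 0) as [->|Ht0].
  { replace (0 * x + (1 - 0) * y) with y by ring. lra. }
  destruct (Req_dec t 1) as [->|Ht1].
  { replace (1 * x + (1 - 1) * y) with x by ring. lra. }
  set (m := t * x + (1 - t) * y).
  assert (Hm1 : x < m) by (unfold m; nra). assert (Hm2 : m < y) by (unfold m; nra).
  destruct (mvt g dg x m Hd Hm1) as [c1 [Hc1 E1]].
  destruct (mvt g dg m y Hd Hm2) as [c2 [Hc2 E2]].
  assert (Hdc : dg c1 <= dg c2) by (apply Hm; lra).
  assert (A1 : m - x = (1 - t) * (y - x)) by (unfold m; ring).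
  assert (A2 : y - m = t * (y - x)) by (unfold m; ring).
  assert (K : t * (1 - t) * (y - x) * dg c1 <= t * (1 - t) * (y - x) * dg c2).
  { apply Rmult_le_compat_l; auto. apply Rmult_le_pos. nra. lra. }
  assert (t * (g m - g x) <= (1 - t) * (g y - g m)).
  { rewrite E1, E2, A1, A2. nra. }
  nra.
Qed.

Lemma conv_of_deriv (g dg : R -> R) : (forall x, is_derive g x (dg x)) -> (forall u v, u <= v -> dg u <= dg v) ->
  convex_fun g.
Proof.
  intros Hd Hm x y t Ht.
  destruct (Rtotal_order x y) as [H1|[H1|H1]].
  - apply (conv_core g dg); auto.
  - subst. replace (t * y + (1 - t) * y) with y by ring. lra.
  - pose proof (conv_core g dg Hd Hm y x (1 - t) H1 ltac:(lra)).
    replace (t * x + (1 - t) * y) with ((1 - t) * y + (1 - (1 - t)) * x) by ring. lra.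
Qed.

Lemma Dm_le u v : u <= v -> Dm u <= Dm v.
Proof.
  intros. unfold Dm. pose proof PI_RGT_0. apply Rmult_le_compat_l.
  unfold Rdiv; apply Rmult_le_pos; [lra| left; apply Rinv_0_lt_compat; lra].
  apply asin_le. lra.
Qed.

Lemma Dm_lt u v : u < v -> -2 < v -> u < 2 -> Dm u < Dm v.
Proof.
  intros. unfold Dm. pose proof PI_RGT_0. apply Rmult_lt_compat_l.
  unfold Rdiv; apply Rmult_lt_0_compat; [lra| apply Rinv_0_lt_compat; lra].
  apply asin_lt; lra.
Qed.

Lemma F_deriv alpha x : is_derive (F_ Omega alpha) x (Dm x - alpha).
Proof.
  unfold F_. assert (E : Derive (fun s => Omega s) x = Dm x) by (apply is_derive_unique, Omega_deriv).
  auto_derive.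
  - exists (Dm x). apply Omega_deriv.
  - replace (Derive (fun x0 : R => Omega x0) x) with (Dm x). ring.
Qed.

Lemma Hyp_Omega alpha : 0 <= alpha < 1 -> Hyp Omega 2 alpha.
Proof.
  intros Ha. pose proof PI_RGT_0.
  assert (DD : forall x, Derive Omega x = Dm x) by (intros; apply is_derive_unique, Omega_deriv).
  set (xp := xplus Omega 2 alpha).
  assert (Hxp : (-2 <= xp <= 2) /\ Derive Omega xp = alpha).
  { unfold xp, xplus. apply (inv_on_spec (fun x => -2 <= x <= 2) (Derive Omega) alpha).
    exists (2 * sin (PI * alpha / 2)). pose proof (SIN_bound (PI * alpha / 2)). split. lra.
    rewrite DD. unfold Dm. replace (2 * sin (PI * alpha / 2) / 2) with (sin (PI * alpha / 2)) by field.
    rewrite asin_sin. field. lra. split; nra. }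
  destruct Hxp as [Hxp1 Hxp2]. rewrite DD in Hxp2.
  assert (Dm2 : Dm 2 = 1).
  { unfold Dm. replace (2/2) with 1 by field. rewrite asin_1. field. lra. }
  assert (Dmm2 : Dm (-2) = -1).
  { unfold Dm. replace (-2/2) with (-1) by field. rewrite asin_lo by lra. field. lra. }
  assert (Hxp3 : -2 < xp < 2).
  { assert (xp <> -2) by (intro Heq; rewrite Heq, Dmm2 in Hxp2; lra).
    assert (xp <> 2) by (intro Heq; rewrite Heq, Dm2 in Hxp2; lra). lra. }
  assert (Hd := F_deriv alpha).
  constructor.
  - exact Ha.
  - intros x. apply continuity_pt_filterlim.
    assert (E : ex_derive (F_ Omega alpha) x) by (eexists; apply Hd).
    exact (ex_derive_continuous _ x E).
  - apply (conv_of_deriv _ (fun x => Dm x - alpha) Hd). intros u v Huv. pose proof (Dm_le u v Huv). lra.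
  - fold xp. lra.
  - intros u v [Huv Hv]. fold xp in Hv. set (m := (u + v) / 2).
    destruct (mvt _ _ u m Hd ltac:(unfold m; lra)) as [c1 [Hc1 E1]].
    destruct (mvt _ _ m v Hd ltac:(unfold m; lra)) as [c2 [Hc2 E2]].
    assert (Dm c1 < alpha) by (rewrite <- Hxp2; apply Dm_lt; unfold m in *; lra).
    assert (Dm c2 <= alpha) by (rewrite <- Hxp2; apply Dm_le; lra).
    assert (0 < (alpha - Dm c1) * (m - u)) by (apply Rmult_lt_0_compat; unfold m in *; lra).
    assert (0 <= (alpha - Dm c2) * (v - m)) by (apply Rmult_le_pos; unfold m in *; lra).
    lra.
  - intros u v [Hu Huv]. fold xp in Hu. set (m := (u + v) / 2).
    destruct (mvt _ _ u m Hd ltac:(unfold m; lra)) as [c1 [Hc1 E1]].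
    destruct (mvt _ _ m v Hd ltac:(unfold m; lra)) as [c2 [Hc2 E2]].
    assert (alpha <= Dm c1) by (rewrite <- Hxp2; apply Dm_le; lra).
    assert (alpha < Dm c2) by (rewrite <- Hxp2; apply Dm_lt; unfold m in *; lra).
    assert (0 <= (Dm c1 - alpha) * (m - u)) by (apply Rmult_le_pos; unfold m in *; lra).
    assert (0 < (Dm c2 - alpha) * (v - m)) by (apply Rmult_lt_0_compat; unfold m in *; lra).
    lra.
  - intros z Hz. unfold F_. rewrite Omega_out; rewrite Rabs_right; lra.
  - intros y Hy. unfold F_. rewrite Omega_out; rewrite Rabs_left; lra.
Qed.

Theorem corollary4p15 (e : nat) (he : (2 <= e)%nat) :
  convex_fun (Shift (1 - 2 / INR e) Omega 2).
Proof.
  unfold Shift. apply Sh_convex_sec. apply Hyp_Omega.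
  assert (He : 2 <= INR e) by (replace 2 with (INR 2) by (simpl; ring); apply le_INR; exact he).
  assert (0 < 2 / INR e <= 1).
  { split. apply Rdiv_lt_0_compat; lra.
    apply Rmult_le_reg_r with (INR e). lra. unfold Rdiv. rewrite Rmult_assoc, Rinv_l by lra. lra. }
  lra.
Qed.
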